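(* Consider the symmetric matrix model $f_{i,j}(\mathbf u)=\sum_{k=1}^H u_{k,i}u_{k,j}$, $i,j\in\{1,\ldots,p\}$, with parameters $\mathbf u=(u_{k,i})\in\mathbb R^{H\times p}$, trained by gradient flow $\frac{d\mathbf u}{dt}=-\frac1T\partial_{\mathbf u}L(\mathbf u)$ on $L(\mathbf u)=\frac12\sum_{i,j=1}^p(f_{i,j}(\mathbf u)-\delta_{i=j})^2$, and write $f_{i,j}(t)=f_{i,j}(\mathbf u(t))$, $\Theta_{i,j;i',j'}(t)=\Theta_{i,j;i',j'}(\mathbf u(t))$. Then the statement ''$\Theta_{i,j;i',j'}(0)=\lim_{t\to\infty}\Theta_{i,j;i',j'}(t)$ for all $i,j,i',j'\in\{1,\ldots,p\}$'' is equivalent to the statement ''$f_{i,j}(0)=\lim_{t\to\infty}f_{i,j}(t)$ for all $i,j\in\{1,\ldots,p\}$''.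
   Context: The neural tangent kernel (NTK) of the model is $\Theta_{i,j;i',j'}(\mathbf u)=\sum_{k=1}^H\sum_{l=1}^p\frac{\partial f_{i,j}(\mathbf u)}{\partial u_{k,l}}\frac{\partial f_{i',j'}(\mathbf u)}{\partial u_{k,l}}$. *)

(* Defs.v *)
From HB Require Import structures.
From mathcomp Require Import all_boot all_order all_algebra.
From mathcomp Require Import all_classical all_reals all_analysis.
Set Implicit Arguments. Unset Strict Implicit. Unset Printing Implicit Defensive.
Import Order.TTheory GRing.Theory Num.Theory.
Import numFieldNormedType.Exports.
Local Open Scope ring_scope.
Local Open Scope classical_set_scope.

Section Model.
Variables (R : realType) (H p : nat).

Definition fmodel (u : 'M[R]_(H, p)) (i j : 'I_p) : R :=
  \sum_(k < H) u k i * u k j.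

Definition partial (F : 'M[R]_(H, p) -> R) (u : 'M[R]_(H, p)) (k : 'I_H) (l : 'I_p) : R :=
  derive1 (fun s : R => F (u + s *: delta_mx k l)) 0.

Definition loss (u : 'M[R]_(H, p)) : R :=
  2^-1 * \sum_(i < p) \sum_(j < p) (fmodel u i j - (i == j)%:R) ^+ 2.

Definition ntk (u : 'M[R]_(H, p)) (i j i' j' : 'I_p) : R :=
  \sum_(k < H) \sum_(l < p)
     partial (fun v => fmodel v i j) u k l * partial (fun v => fmodel v i' j') u k l.

Definition gradient_flow (T : R) (u : R -> 'M[R]_(H, p)) : Prop :=
  (forall k l, (fun t => u t k l) @ (0:R)^'+ --> u 0 k l) /\
  (forall t, 0 < t -> forall k l,
     derivable (fun s => u s k l) t 1 /\
     derive1 (fun s => u s k l) t = - T^-1 * partial loss (u t) k l).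

End Model.

(* Main.v *)
Require Import Defs.
From HB Require Import structures.
From mathcomp Require Import all_boot all_order all_algebra.
From mathcomp Require Import all_classical all_reals all_analysis.
From mathcomp Require Import ring lra.
Import Order.TTheory GRing.Theory Num.Theory.
Import numFieldNormedType.Exports.
Local Open Scope ring_scope.
Local Open Scope classical_set_scope.

Lemma der_aff (R : realType) n (a b c d : 'I_n -> R) :
  derive1 (fun s : R => \sum_(k < n) (a k + s * b k) * (c k + s * d k)) 0
  = \sum_(k < n) (a k * d k + c k * b k).
Proof.
have E : (fun s : R => \sum_(k < n) (a k + s * b k) * (c k + s * d k)) =
   \sum_(k < n) (fun s : R => (a k + s * b k) * (c k + s * d k)).
  by apply/funext => s; rewrite fct_sumE.
rewrite derive1E E; apply: derive_val.
have -> : \sum_(k < n) (a k * d k + c k * b k) = 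
  \sum_(k < n) ((cst (a k) + b k \*: id) 0 *: (0 + d k *: 1) +
                 (cst (c k) + d k \*: id) 0 *: (0 + b k *: 1)).
  apply: eq_bigr => k _ /=.
  rewrite /GRing.scale /= !add0r !mulr1 !fctE /cst /= /GRing.scale /= !mulr0 !addr0. by [].
apply: is_derive_sum => k.
have -> : (fun s : R => (a k + s * b k) * (c k + s * d k)) =
   ((cst (a k) + b k \*: id) * (cst (c k) + d k \*: id)).
  by apply/funext => s /=; rewrite /GRing.scale /= (mulrC s) (mulrC s).
apply: is_deriveM; apply: is_deriveD; apply: is_deriveZ.
Qed.

Section S.
Variables (R : realType) (H p : nat).

Lemma partial_f (u : 'M[R]_(H, p)) i j k l :
  partial (fun v => fmodel v i j) u k l = (l == i)%:R * u k j + (l == j)%:R * u k i.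
Proof.
rewrite /partial /fmodel.
have -> : (fun s : R => \sum_(k0 < H) (u + s *: delta_mx k l) k0 i * (u + s *: delta_mx k l) k0 j)
  = (fun s : R => \sum_(k0 < H) (u k0 i + s * delta_mx k l k0 i) * (u k0 j + s * delta_mx k l k0 j)).
  by apply/funext => s; apply: eq_bigr => k0 _; rewrite !mxE.
rewrite der_aff (bigD1 k) //= big1 ?addr0 => [|k0 /negbTE Hk].
  by rewrite !mxE !eqxx /= addrC; congr (_ + _); rewrite mulrC // eq_sym.
by rewrite !mxE Hk /= !mulr0 addr0.
Qed.

Lemma sum_delta2 (a b : 'I_p) (F G : 'I_H -> R) :
  \sum_(k < H) \sum_(l < p) ((l == a)%:R * F k) * ((l == b)%:R * G k)
  = (a == b)%:R * \sum_(k < H) F k * G k.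
Proof.
rewrite mulr_sumr; apply: eq_bigr => k _.
rewrite (bigD1 a) //= big1 ?addr0 => [|l /negbTE ->]; last by rewrite !mul0r.
by rewrite eqxx mul1r mulrCA mulrA.
Qed.

Lemma fmodelC (u : 'M[R]_(H, p)) i j : fmodel u i j = fmodel u j i.
Proof. by apply: eq_bigr => k _; rewrite mulrC. Qed.

Lemma ntkE (u : 'M[R]_(H, p)) i j i' j' :
  ntk u i j i' j' = (i == i')%:R * fmodel u j j' + (i == j')%:R * fmodel u j i'
    + (j == i')%:R * fmodel u i j' + (j == j')%:R * fmodel u i i'.
Proof.
rewrite /ntk.
under eq_bigr => k _ do under eq_bigr => l _ do rewrite !partial_f !mulrDl !mulrDr.
under eq_bigr => k _ do rewrite !big_split /=.
rewrite !big_split /= !sum_delta2.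
by rewrite /fmodel !addrA.
Qed.
End S.

Theorem proposition2 (R : realType) (H p : nat) (T : R) (u : R -> 'M[R]_(H, p)) :
  0 < T -> gradient_flow T u ->
  ((forall i j i' j' : 'I_p,
      ntk (u t) i j i' j' @[t --> +oo] --> ntk (u 0) i j i' j')
   <->
   (forall i j : 'I_p, fmodel (u t) i j @[t --> +oo] --> fmodel (u 0) i j)).
Proof.
move=> _ _; split.
- move=> Hn i j.
  pose c : R := if i == j then 4^-1 else 2^-1.
  have Ef : forall v : 'M[R]_(H, p), fmodel v i j = c * ntk v i j i i.
    move=> v; rewrite ntkE /c eqxx !mul1r (@fmodelC R H p v j i).
    have [<-|nij] := eqVneq i j.
      by rewrite ?eqxx ?mul1r; field.
    by rewrite !mul0r !addr0; field.
  have E : (fun t => fmodel (u t) i j) = (fun t => c * ntk (u t) i j i i).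
    by apply/funext => t; rewrite Ef.
  rewrite E Ef; apply: cvgMl_tmp; exact: Hn.
- move=> Hf i j i' j'.
  have E : (fun t => ntk (u t) i j i' j') = (fun t =>
    (i == i')%:R * fmodel (u t) j j' + (i == j')%:R * fmodel (u t) j i'
    + (j == i')%:R * fmodel (u t) i j' + (j == j')%:R * fmodel (u t) i i').
    by apply/funext => t; rewrite ntkE.
  rewrite E ntkE.
  by apply: cvgD; [apply: cvgD; [apply: cvgD|]|]; apply: cvgMl_tmp; apply: Hf.
Qed.
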